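(* The category $lrTORS$ of bitorsors is equivalent to the category of fibrations-in-groupoids $\gamma:\mathbf X\to\mathbf I$ over $\mathbf I$ whose total category $\mathbf X$ is inhabited (morphisms being functors $\mathbf X\to\mathbf X'$ commuting with the projections to $\mathbf I$).
   Context: Groupoids are inhabited; composition is written left to right. $\mathbf I$ is the groupoid with two objects $a_0,b_0$, and, besides the identities, exactly one arrow $i:a_0\to b_0$ and its inverse $i^{-1}:b_0\to a_0$. A fibration-in-groupoids over $\mathbf I$ is a Grothendieck fibration $\gamma:\mathbf X\to\mathbf I$ whose fibres are groupoids (equivalently all arrows of $\mathbf X$ are cartesian); here $\mathbf X$ is then itself a groupoid. A bitorsor consists of a span $A\xleftarrow{\alpha}X\xrightarrow{\beta}B$ of sets, a groupoid $\mathbf G$ with object set $A$ acting on the left on $\alpha$ (for $\alpha(x)=d_1(g)$, an element $g\cdot x$ with $\alpha(g\cdot x)=d_0(g)$, unital and associative), and a groupoid $\mathbf H$ with object set $B$ acting on the right on $\beta$ (for $\beta(x)=d_0(h)$, an element $x\cdot h$ with $\beta(x\cdot h)=d_1(h)$), such that the actions commute ($(g\cdot x)\cdot h=g\cdot(x\cdot h)$), $X$ is inhabited, $\alpha$ and $\beta$ are surjective, for $x,y$ there is at most one $g$ with $g\cdot x=y$ and at most one $h$ with $x\cdot h=y$, $\beta$ is the quotient map of $X$ by the relation ''$y=g\cdot x$ for some $g$'', and $\alpha$ is the quotient map by the relation ''$y=x\cdot h$ for some $h$''. A morphism of bitorsors is a pair of functors $\mathbf G\to\mathbf G'$, $\mathbf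 H\to\mathbf H'$ and a map $X\to X'$ compatible with the span maps and both actions. *)

(* Defs.v *)
Set Implicit Arguments.
Unset Strict Implicit.

(* d0 f = domain (source), d1 f = codomain (target).                   *)
(* Composition is written LEFT TO RIGHT: ccomp f g = "f then g",       *)
(* meaningful when d1 f = d0 g (a total function; its values on        *)
(* non-composable pairs are irrelevant).                               *)
Record Category := {
  cob : Type;
  car : Type;
  d0 : car -> cob;
  d1 : car -> cob;
  cid : cob -> car;
  ccomp : car -> car -> car;
  d0_id : forall a, d0 (cid a) = a;
  d1_id : forall a, d1 (cid a) = a;
  d0_comp : forall f g, d1 f = d0 g -> d0 (ccomp f g) = d0 f;
  d1_comp : forall f g, d1 f = d0 g -> d1 (ccomp f g) = d1 g;
  comp_id_l : forall f, ccomp (cid (d0 f)) f = f;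
  comp_id_r : forall f, ccomp f (cid (d1 f)) = f;
  comp_assoc : forall f g h, d1 f = d0 g -> d1 g = d0 h ->
      ccomp (ccomp f g) h = ccomp f (ccomp g h)
}.
Arguments d0 {_} _.
Arguments d1 {_} _.
Arguments cid {_} _.
Arguments ccomp {_} _ _.

Record Groupoid := {
  gcat :> Category;
  ginv : car gcat -> car gcat;
  d0_inv : forall f, d0 (ginv f) = d1 f;
  d1_inv : forall f, d1 (ginv f) = d0 f;
  comp_inv_r : forall f, ccomp f (ginv f) = cid (d0 f);
  comp_inv_l : forall f, ccomp (ginv f) f = cid (d1 f);
  ginh : inhabited (cob gcat)
}.

Record Functor (C D : Category) := {
  fob : cob C -> cob D;
  far : car C -> car D;
  f_d0 : forall f, d0 (far f) = fob (d0 f);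
  f_d1 : forall f, d1 (far f) = fob (d1 f);
  f_id : forall a, far (cid a) = cid (fob a);
  f_comp : forall f g, d1 f = d0 g -> far (ccomp f g) = ccomp (far f) (far g)
}.
Arguments fob {_ _} _ _.
Arguments far {_ _} _ _.

Definition functor_id (C : Category) : Functor C C.
Proof.
  refine {| fob := fun a => a; far := fun f => f |}; reflexivity.
Defined.

Definition functor_comp (C D E : Category) (F : Functor C D) (G : Functor D E)
  : Functor C E.
Proof.
  refine {| fob := fun a => fob G (fob F a); far := fun f => far G (far F f) |}.
  - intro f; rewrite f_d0, f_d0; reflexivity.
  - intro f; rewrite f_d1, f_d1; reflexivity.
  - intro a; rewrite f_id, f_id; reflexivity.
  - intros f g H. rewrite (f_comp F H), f_comp; [reflexivity|].
    rewrite f_d1, f_d0, H; reflexivity.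
Defined.

(* Hcomp f g = "f then g".                                            *)
Record Cat := {
  Ob : Type;
  Hom : Ob -> Ob -> Type;
  Heq : forall a b, Hom a b -> Hom a b -> Prop;
  Hid : forall a, Hom a a;
  Hcomp : forall a b c, Hom a b -> Hom b c -> Hom a c;
  Heq_refl : forall a b (f : Hom a b), Heq f f;
  Heq_sym : forall a b (f g : Hom a b), Heq f g -> Heq g f;
  Heq_trans : forall a b (f g h : Hom a b), Heq f g -> Heq g h -> Heq f h;
  Hcomp_resp : forall a b c (f f' : Hom a b) (g g' : Hom b c),
      Heq f f' -> Heq g g' -> Heq (Hcomp f g) (Hcomp f' g');
  Hcomp_id_l : forall a b (f : Hom a b), Heq (Hcomp (Hid a) f) f;
  Hcomp_id_r : forall a b (f : Hom a b), Heq (Hcomp f (Hid b)) f;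
  Hcomp_assoc : forall a b c d (f : Hom a b) (g : Hom b c) (h : Hom c d),
      Heq (Hcomp (Hcomp f g) h) (Hcomp f (Hcomp g h))
}.
Arguments Hom {_} _ _.
Arguments Heq {_ _ _} _ _.
Arguments Hid {_} _.
Arguments Hcomp {_ _ _ _} _ _.

Record CFunctor (C D : Cat) := {
  Fo : Ob C -> Ob D;
  Fm : forall a b, Hom a b -> Hom (Fo a) (Fo b);
  Fm_resp : forall a b (f g : Hom a b), Heq f g -> Heq (Fm f) (Fm g);
  Fm_id : forall a, Heq (Fm (Hid a)) (Hid (Fo a));
  Fm_comp : forall a b c (f : Hom a b) (g : Hom b c),
      Heq (Fm (Hcomp f g)) (Hcomp (Fm f) (Fm g))
}.
Arguments Fo {_ _} _ _.
Arguments Fm {_ _} _ {_ _} _.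

Definition NatIso (C D : Cat) (F0 G0 : Ob C -> Ob D)
  (F1 : forall a b, Hom a b -> Hom (F0 a) (F0 b))
  (G1 : forall a b, Hom a b -> Hom (G0 a) (G0 b)) : Prop :=
  exists (eta : forall a, Hom (F0 a) (G0 a)) (eta' : forall a, Hom (G0 a) (F0 a)),
    (forall a, Heq (Hcomp (eta a) (eta' a)) (Hid (F0 a))) /\
    (forall a, Heq (Hcomp (eta' a) (eta a)) (Hid (G0 a))) /\
    (forall a b (f : Hom a b), Heq (Hcomp (F1 a b f) (eta b)) (Hcomp (eta a) (G1 a b f))).
Arguments NatIso {C D} F0 G0 F1 G1.

Definition CatEquiv (C D : Cat) : Prop :=
  exists (F : CFunctor C D) (G : CFunctor D C),
    NatIso (fun a => Fo G (Fo F a)) (fun a => a)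
           (fun a b f => Fm G (Fm F f)) (fun a b f => f) /\
    NatIso (fun b => Fo F (Fo G b)) (fun b => b)
           (fun a b f => Fm F (Fm G f)) (fun a b f => f).

Record Bitorsor := {
  tG : Groupoid;            (* object set A = cob tG *)
  tH : Groupoid;            (* object set B = cob tH *)
  tX : Type;
  alpha : tX -> cob tG;
  beta : tX -> cob tH;
  lact : car tG -> tX -> tX;   (* lact g x = g . x, meaningful if alpha x = d1 g *)
  ract : tX -> car tH -> tX;   (* ract x h = x . h, meaningful if beta x = d0 h *)
  lact_alpha : forall g x, alpha x = d1 g -> alpha (lact g x) = d0 g;
  lact_id : forall x, lact (cid (alpha x)) x = x;
  lact_assoc : forall g g' x, d1 g = d0 g' -> alpha x = d1 g' ->
      lact (ccomp g g') x = lact g (lact g' x);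
  ract_beta : forall x h, beta x = d0 h -> beta (ract x h) = d1 h;
  ract_id : forall x, ract x (cid (beta x)) = x;
  ract_assoc : forall x h h', beta x = d0 h -> d1 h = d0 h' ->
      ract (ract x h) h' = ract x (ccomp h h');
  act_comm : forall g x h, alpha x = d1 g -> beta x = d0 h ->
      ract (lact g x) h = lact g (ract x h);
  X_inh : inhabited tX;
  alpha_surj : forall a, exists x, alpha x = a;
  beta_surj : forall b, exists x, beta x = b;
  lact_free : forall g g' x, alpha x = d1 g -> alpha x = d1 g' ->
      lact g x = lact g' x -> g = g';
  ract_free : forall h h' x, beta x = d0 h -> beta x = d0 h' ->
      ract x h = ract x h' -> h = h';
  (* beta is the quotient map by "y = g . x for some g" *)
  beta_quot : forall x y, beta x = beta y <-> exists g, alpha x = d1 g /\ y = lact g x;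
  (* alpha is the quotient map by "y = x . h for some h" *)
  alpha_quot : forall x y, alpha x = alpha y <-> exists h, beta x = d0 h /\ y = ract x h
}.

Record BitorsorMor (T T' : Bitorsor) := {
  mG : Functor (tG T) (tG T');
  mH : Functor (tH T) (tH T');
  mX : tX T -> tX T';
  m_alpha : forall x, alpha (mX x) = fob mG (alpha x);
  m_beta : forall x, beta (mX x) = fob mH (beta x);
  m_lact : forall g x, alpha x = d1 g ->
      mX (lact g x) = lact (far mG g) (mX x);
  m_ract : forall x h, beta x = d0 h ->
      mX (ract x h) = ract (mX x) (far mH h)
}.
Arguments mG {_ _} _.
Arguments mH {_ _} _.
Arguments mX {_ _} _ _.

Definition bmor_eq (T T' : Bitorsor) (m m' : BitorsorMor T T') : Prop :=
  (forall a, fob (mG m) a = fob (mG m') a) /\ (forall g, far (mG m) g = far (mG m') g) /\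
  (forall b, fob (mH m) b = fob (mH m') b) /\ (forall h, far (mH m) h = far (mH m') h) /\
  (forall x, mX m x = mX m' x).

Definition bmor_id (T : Bitorsor) : BitorsorMor T T.
Proof.
  refine {| mG := functor_id _; mH := functor_id _; mX := fun x => x |};
    reflexivity.
Defined.

Definition bmor_comp (T1 T2 T3 : Bitorsor) (m : BitorsorMor T1 T2) (n : BitorsorMor T2 T3)
  : BitorsorMor T1 T3.
Proof.
  refine {| mG := functor_comp (mG m) (mG n); mH := functor_comp (mH m) (mH n);
            mX := fun x => mX n (mX m x) |}; simpl.
  - intro x; rewrite m_alpha, m_alpha; reflexivity.
  - intro x; rewrite m_beta, m_beta; reflexivity.
  - intros g x H. rewrite (m_lact m H), m_lact; [reflexivity|].
    rewrite m_alpha, f_d1, H; reflexivity.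
  - intros x h H. rewrite (m_ract m H), m_ract; [reflexivity|].
    rewrite m_beta, f_d0, H; reflexivity.
Defined.

Definition lrTORS : Cat.
Proof.
  refine {| Ob := Bitorsor; Hom := BitorsorMor; Heq := bmor_eq;
            Hid := bmor_id; Hcomp := bmor_comp |}; unfold bmor_eq; simpl.
  - intros; repeat split; reflexivity.
  - intros a b f g (H1&H2&H3&H4&H5); repeat split; intros; symmetry; auto.
  - intros a b f g h (H1&H2&H3&H4&H5) (K1&K2&K3&K4&K5); repeat split; intros;
      etransitivity; eauto.
  - intros a b c f f' g g' (H1&H2&H3&H4&H5) (K1&K2&K3&K4&K5); repeat split; intros;
      congruence.
  - intros; repeat split; reflexivity.
  - intros; repeat split; reflexivity.
  - intros; repeat split; reflexivity.
Defined.

Inductive Iob := a0 | b0.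
Inductive Iar := ida0 | idb0 | iarr | iinv.

Definition I_d0 (f : Iar) : Iob :=
  match f with ida0 => a0 | idb0 => b0 | iarr => a0 | iinv => b0 end.
Definition I_d1 (f : Iar) : Iob :=
  match f with ida0 => a0 | idb0 => b0 | iarr => b0 | iinv => a0 end.
Definition I_id (a : Iob) : Iar := match a with a0 => ida0 | b0 => idb0 end.
(* left-to-right composition; values on non-composable pairs are junk *)
Definition I_comp (f g : Iar) : Iar :=
  match f, g with
  | ida0, _ => g
  | idb0, _ => g
  | _, ida0 => f
  | _, idb0 => f
  | iarr, iinv => ida0
  | iinv, iarr => idb0
  | iarr, iarr => iarr
  | iinv, iinv => iinv
  end.

Definition Icat : Category.
Proof.
  refine {| cob := Iob; car := Iar; d0 := I_d0; d1 := I_d1; cid := I_id;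
            ccomp := I_comp |}.
  all: try (intros []; reflexivity).
  all: try (intros [] []; simpl; intro H; try discriminate H; reflexivity).
  intros [] [] []; simpl; intros H K; try discriminate H; try discriminate K;
    reflexivity.
Defined.

Section Fib.
Variables (X : Category) (gam : Functor X Icat).

Definition cartesian (f : car X) : Prop :=
  forall (g : car X) (w : car Icat),
    d1 g = d1 f -> d0 w = fob gam (d0 g) -> d1 w = fob gam (d0 f) ->
    ccomp w (far gam f) = far gam g ->
    exists h : car X,
      (d0 h = d0 g /\ d1 h = d0 f /\ far gam h = w /\ ccomp h f = g) /\
      (forall h' : car X,
          d0 h' = d0 g -> d1 h' = d0 f -> far gam h' = w -> ccomp h' f = g ->
          h' = h).

Definition is_fibration : Prop :=
  forall (e : cob X) (u : car Icat), d1 u = fob gam e ->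
    exists f : car X, d1 f = e /\ far gam f = u /\ cartesian f.

Definition fibres_groupoids : Prop :=
  forall f : car X, far gam f = cid (fob gam (d0 f)) ->
    exists f' : car X, d0 f' = d1 f /\ d1 f' = d0 f /\
      ccomp f f' = cid (d0 f) /\ ccomp f' f = cid (d1 f).
End Fib.

Record FibI := {
  fX : Category;
  fgam : Functor fX Icat;
  f_fib : is_fibration fgam;
  f_gpd : fibres_groupoids fgam;
  fX_inh : inhabited (cob fX)
}.

Record FibMor (P Q : FibI) := {
  mF : Functor (fX P) (fX Q);
  mF_ob : forall e, fob (fgam Q) (fob mF e) = fob (fgam P) e;
  mF_ar : forall f, far (fgam Q) (far mF f) = far (fgam P) f
}.
Arguments mF {_ _} _.

Definition fmor_eq (P Q : FibI) (m m' : FibMor P Q) : Prop :=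
  (forall e, fob (mF m) e = fob (mF m') e) /\ (forall f, far (mF m) f = far (mF m') f).

Definition fmor_id (P : FibI) : FibMor P P.
Proof. refine {| mF := functor_id _ |}; reflexivity. Defined.

Definition fmor_comp (P Q R : FibI) (m : FibMor P Q) (n : FibMor Q R) : FibMor P R.
Proof.
  refine {| mF := functor_comp (mF m) (mF n) |}; simpl.
  - intro e; rewrite mF_ob, mF_ob; reflexivity.
  - intro f; rewrite mF_ar, mF_ar; reflexivity.
Defined.

Definition FibIcat : Cat.
Proof.
  refine {| Ob := FibI; Hom := FibMor; Heq := fmor_eq;
            Hid := fmor_id; Hcomp := fmor_comp |}; unfold fmor_eq; simpl.
  - intros; split; reflexivity.
  - intros a b f g (H1&H2); split; intros; symmetry; auto.
  - intros a b f g h (H1&H2) (K1&K2); split; intros; etransitivity; eauto.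
  - intros a b c f f' g g' (H1&H2) (K1&K2); split; intros; congruence.
  - intros; split; reflexivity.
  - intros; split; reflexivity.
  - intros; split; reflexivity.
Defined.

(* Main.v *)
Require Import Defs.
From Stdlib Require Import ClassicalEpsilon ProofIrrelevance.

Lemma ginv_unique (G : Groupoid) (f f' : car G) :
  d1 f = d0 f' -> ccomp f f' = cid (d0 f) -> ginv f = f'.
Proof.
  intros H1 H2.
  rewrite <- (comp_id_r (ginv f)), d1_inv, <- H2.
  rewrite <- comp_assoc by (rewrite ?d1_inv, ?d0_inv; auto).
  rewrite comp_inv_l, H1, comp_id_l. reflexivity.
Qed.

Lemma ginv_id (G : Groupoid) a : @ginv G (cid a) = cid a.
Proof.
  apply ginv_unique; rewrite ?d1_id, ?d0_id; auto.
  rewrite <- (d1_id a) at 2. rewrite comp_id_r. reflexivity.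
Qed.

Lemma ginv_ginv (G : Groupoid) (f : car G) : @ginv G (ginv f) = f.
Proof.
  apply ginv_unique; rewrite ?d1_inv, ?d0_inv; auto.
  rewrite comp_inv_l. reflexivity.
Qed.

Lemma ginv_comp (G : Groupoid) (f g : car G) : d1 f = d0 g ->
  ginv (ccomp f g) = ccomp (ginv g) (ginv f).
Proof.
  intro H. apply ginv_unique.
  - rewrite d1_comp, d0_comp, d0_inv; auto; rewrite ?d1_inv, ?d0_inv; auto.
  - rewrite comp_assoc; rewrite ?d1_comp, ?d0_comp, ?d1_inv, ?d0_inv; auto.
    rewrite <- (@comp_assoc _ g (ginv g)); rewrite ?d1_inv, ?d0_inv; auto.
    rewrite comp_inv_r, <- H, <- (d0_inv f), comp_id_l, comp_inv_r. reflexivity.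
    rewrite d1_inv, d0_inv; congruence.
Qed.

Set Implicit Arguments.
Unset Strict Implicit.

Lemma inh_car (G : Groupoid) : inhabited (car G).
Proof. destruct (ginh G) as [a]. exact (inhabits (cid a)). Qed.

Lemma lact_beta (T : Bitorsor) (g : car (tG T)) (x : tX T) : alpha x = d1 g -> beta (lact g x) = beta x.
Proof. intro H. symmetry. apply beta_quot. exists g. auto. Qed.

Lemma ract_alpha (T : Bitorsor) (x : tX T) (h : car (tH T)) : beta x = d0 h -> alpha (ract x h) = alpha x.
Proof. intro H. symmetry. apply alpha_quot. exists h. auto. Qed.

Definition lq (T : Bitorsor) (x y : tX T) : car (tG T) :=
  epsilon (inh_car _) (fun g => d1 g = alpha y /\ lact g y = x).
Definition rq (T : Bitorsor) (y x : tX T) : car (tH T) :=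
  epsilon (inh_car _) (fun h => d0 h = beta y /\ ract y h = x).

Arguments lq {T} x y.
Arguments rq {T} y x.

Lemma lq_spec (T : Bitorsor) (x y : tX T) : beta x = beta y ->
  d1 (lq x y) = alpha y /\ lact (lq x y) y = x.
Proof.
  intro H. unfold lq. apply epsilon_spec.
  destruct (proj1 (beta_quot y x) (eq_sym H)) as [g [H1 H2]].
  exists g. auto.
Qed.

Lemma rq_spec (T : Bitorsor) (y x : tX T) : alpha y = alpha x ->
  d0 (rq y x) = beta y /\ ract y (rq y x) = x.
Proof.
  intro H. unfold rq. apply epsilon_spec.
  destruct (proj1 (alpha_quot y x) H) as [h [H1 H2]].
  exists h. auto.
Qed.

Lemma lq_d1 (T : Bitorsor) (x y : tX T) : beta x = beta y -> d1 (lq x y) = alpha y.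
Proof. intro H. apply (lq_spec H). Qed.
Lemma lq_act (T : Bitorsor) (x y : tX T) : beta x = beta y -> lact (lq x y) y = x.
Proof. intro H. apply (lq_spec H). Qed.
Lemma lq_d0 (T : Bitorsor) (x y : tX T) : beta x = beta y -> d0 (lq x y) = alpha x.
Proof.
  intro H. destruct (lq_spec H) as [H1 H2].
  rewrite <- H2 at 2. rewrite lact_alpha; auto.
Qed.
Lemma rq_d0 (T : Bitorsor) (y x : tX T) : alpha y = alpha x -> d0 (rq y x) = beta y.
Proof. intro H. apply (rq_spec H). Qed.
Lemma rq_act (T : Bitorsor) (y x : tX T) : alpha y = alpha x -> ract y (rq y x) = x.
Proof. intro H. apply (rq_spec H). Qed.
Lemma rq_d1 (T : Bitorsor) (y x : tX T) : alpha y = alpha x -> d1 (rq y x) = beta x.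
Proof.
  intro H. destruct (rq_spec H) as [H1 H2].
  rewrite <- H2 at 2. rewrite ract_beta; auto.
Qed.

Ltac sc :=
  simpl in *;
  first
  [ reflexivity | assumption | (symmetry; assumption)
  | match goal with
    | |- context [alpha (lact ?g ?x)] => rewrite (@lact_alpha _ g x) by sc; sc
    | |- context [beta (lact ?g ?x)] => rewrite (@lact_beta _ g x) by sc; sc
    | |- context [beta (ract ?x ?h)] => rewrite (@ract_beta _ x h) by sc; sc
    | |- context [alpha (ract ?x ?h)] => rewrite (@ract_alpha _ x h) by sc; sc
    | |- context [d0 (lq ?x ?y)] => rewrite (@lq_d0 _ x y) by sc; sc
    | |- context [d1 (lq ?x ?y)] => rewrite (@lq_d1 _ x y) by sc; sc
    | |- context [d0 (rq ?x ?y)] => rewrite (@rq_d0 _ x y) by sc; sc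
    | |- context [d1 (rq ?x ?y)] => rewrite (@rq_d1 _ x y) by sc; sc
    | |- context [d0 (ccomp ?f ?g)] => rewrite (@d0_comp _ f g) by sc; sc
    | |- context [d1 (ccomp ?f ?g)] => rewrite (@d1_comp _ f g) by sc; sc
    | |- context [d0 (ginv _)] => rewrite d0_inv; sc
    | |- context [d1 (ginv _)] => rewrite d1_inv; sc
    | |- context [d0 (cid _)] => rewrite d0_id; sc
    | |- context [d1 (cid _)] => rewrite d1_id; sc
    end
  | congruence ].

Lemma lq_unique (T : Bitorsor) (x y : tX T) (g : car (tG T)) :
  alpha y = d1 g -> lact g y = x -> lq x y = g.
Proof.
  intros H1 H2. subst x.
  apply (lact_free (x := y)); try sc.
  rewrite lq_act; sc.
Qed.

Lemma rq_unique (T : Bitorsor) (x y : tX T) (h : car (tH T)) :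
  beta y = d0 h -> ract y h = x -> rq y x = h.
Proof.
  intros H1 H2. subst x.
  apply (ract_free (x := y)); try sc.
  rewrite rq_act; sc.
Qed.

Lemma lact_inv (T : Bitorsor) (g : car (tG T)) (x : tX T) : alpha x = d1 g -> lact (ginv g) (lact g x) = x.
Proof.
  intro H. rewrite <- lact_assoc by sc. rewrite comp_inv_l, <- H, lact_id. reflexivity.
Qed.
Lemma lact_inv' (T : Bitorsor) (g : car (tG T)) (x : tX T) : alpha x = d0 g -> lact g (lact (ginv g) x) = x.
Proof.
  intro H. rewrite <- lact_assoc by sc. rewrite comp_inv_r, <- H, lact_id. reflexivity.
Qed.
Lemma ract_inv (T : Bitorsor) (h : car (tH T)) (x : tX T) : beta x = d0 h -> ract (ract x h) (ginv h) = x.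
Proof.
  intro H. rewrite ract_assoc by sc. rewrite comp_inv_r, <- H, ract_id. reflexivity.
Qed.
Lemma ract_inv' (T : Bitorsor) (h : car (tH T)) (x : tX T) : beta x = d1 h -> ract (ract x (ginv h)) h = x.
Proof.
  intro H. rewrite ract_assoc by sc. rewrite comp_inv_l, <- H, ract_id. reflexivity.
Qed.

Inductive TAr (T : Bitorsor) :=
| AG (g : car (tG T)) | AH (h : car (tH T)) | AX (x : tX T) | AY (y : tX T).
Arguments AG {T} g. Arguments AH {T} h. Arguments AX {T} x. Arguments AY {T} y.

Definition TOb (T : Bitorsor) := (cob (tG T) + cob (tH T))%type.

Definition td0 (T : Bitorsor) (f : TAr T) : TOb T :=
  match f with AG g => inl (d0 g) | AH h => inr (d0 h)
             | AX x => inl (alpha x) | AY y => inr (beta y) end.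
Definition td1 (T : Bitorsor) (f : TAr T) : TOb T :=
  match f with AG g => inl (d1 g) | AH h => inr (d1 h)
             | AX x => inr (beta x) | AY y => inl (alpha y) end.
Definition tid (T : Bitorsor) (e : TOb T) : TAr T :=
  match e with inl a => AG (cid a) | inr b => AH (cid b) end.
Definition tcomp (T : Bitorsor) (f g : TAr T) : TAr T :=
  match f, g with
  | AG g1, AG g2 => AG (ccomp g1 g2)
  | AG g1, AX x => AX (lact g1 x)
  | AX x, AH h => AX (ract x h)
  | AX x, AY y => AG (lq x y)
  | AH h1, AH h2 => AH (ccomp h1 h2)
  | AH h, AY y => AY (ract y (ginv h))
  | AY y, AG g => AY (lact (ginv g) y)
  | AY y, AX x => AH (rq y x)
  | _, _ => f
  end.

Lemma tcomp_assoc (T : Bitorsor) (f g h : TAr T) :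
  td1 f = td0 g -> td1 g = td0 h -> tcomp (tcomp f g) h = tcomp f (tcomp g h).
Proof.
  revert f g h.
  intros [g1|h1|x1|y1] [g2|h2|x2|y2] [g3|h3|x3|y3]; simpl; intros H1 H2;
    try discriminate H1; try discriminate H2;
    injection H1 as H1; injection H2 as H2; simpl.
  - f_equal; apply comp_assoc; sc.
  - f_equal; apply lact_assoc; sc.
  - f_equal; apply act_comm; sc.
  - f_equal. apply lq_unique; [sc|].
    rewrite lact_assoc by sc. rewrite lq_act by sc. reflexivity.
  - f_equal; apply comp_assoc; sc.
  - f_equal. rewrite ginv_comp by sc. rewrite ract_assoc by sc. reflexivity.
  - f_equal; symmetry; apply act_comm; sc.
  - f_equal. apply rq_unique; [sc|].
    rewrite <- (@ract_assoc _ (ract y2 (ginv h1)) h1 (rq y2 x3)) by sc.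
    rewrite ract_inv' by sc. apply rq_act; sc.
  - f_equal; apply ract_assoc; sc.
  - f_equal. apply lq_unique; [sc|].
    transitivity (ract (lact (lq x1 (ract y3 (ginv h2))) (ract y3 (ginv h2))) h2).
    + rewrite act_comm by sc. rewrite ract_inv' by sc. reflexivity.
    + rewrite lq_act by sc. reflexivity.
  - symmetry; f_equal; apply lq_unique; [sc|].
    rewrite lact_assoc by sc. rewrite lact_inv' by sc. rewrite lq_act by sc. reflexivity.
  - f_equal.
    transitivity (lact (lq x1 y2) (ract y2 (rq y2 x3))).
    + rewrite rq_act by sc. reflexivity.
    + rewrite <- act_comm by sc. rewrite lq_act by sc. reflexivity.
  - f_equal. rewrite ginv_comp by sc. rewrite lact_assoc by sc. reflexivity.
  - f_equal. apply rq_unique; [sc|].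
    rewrite act_comm by sc. rewrite rq_act by sc. rewrite lact_inv by sc. reflexivity.
  - symmetry; f_equal; apply rq_unique; [sc|].
    rewrite <- ract_assoc by sc. rewrite rq_act by sc. reflexivity.
  - f_equal.
    transitivity (ract (lact (ginv (lq x2 y3)) (lact (lq x2 y3) y3)) (ginv (rq y1 x2))).
    + rewrite lact_inv by sc. reflexivity.
    + rewrite lq_act by sc.
      transitivity (ract (lact (ginv (lq x2 y3)) (ract y1 (rq y1 x2))) (ginv (rq y1 x2))).
      * rewrite rq_act by sc. reflexivity.
      * rewrite act_comm by sc. rewrite ract_inv by sc. reflexivity.
Qed.

Lemma gpd_cartesian (C : Category) (gam : Functor C Icat) :
  (forall f : car C, exists f', d1 f = d0 f' /\ d1 f' = d0 f /\
      ccomp f f' = cid (d0 f) /\ ccomp f' f = cid (d1 f)) ->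
  forall f, cartesian gam f.
Proof.
  intros Hinv f g w Hg Hw0 Hw1 Hw.
  destruct (Hinv f) as [f' [E1 [E2 [E3 E4]]]].
  exists (ccomp g f'). split.
  - split; [|split; [|split]].
    + apply d0_comp; congruence.
    + rewrite d1_comp by congruence. auto.
    + rewrite f_comp by congruence. rewrite <- Hw.
      rewrite comp_assoc by (rewrite ?f_d0, ?f_d1; congruence).
      rewrite <- f_comp by congruence. rewrite E3, f_id, <- Hw1.
      apply comp_id_r.
    + rewrite comp_assoc by congruence. rewrite E4, <- Hg. apply comp_id_r.
  - intros h' H0 H1 H2 H3. subst g.
    rewrite comp_assoc by congruence. rewrite E3, <- H1. symmetry; apply comp_id_r.
Qed.

Definition tcat (T : Bitorsor) : Category.
Proof.
  refine {| cob := TOb T; car := TAr T; d0 := @td0 T; d1 := @td1 T; cid := @tid T;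
            ccomp := @tcomp T; comp_assoc := @tcomp_assoc T |}.
  - intros [a|b]; simpl; f_equal; apply d0_id.
  - intros [a|b]; simpl; f_equal; apply d1_id.
  - intros [g1|h1|x1|y1] [g2|h2|x2|y2]; simpl; intro H1; try discriminate H1;
    injection H1 as H1; simpl; f_equal; sc.
  - intros [g1|h1|x1|y1] [g2|h2|x2|y2]; simpl; intro H1; try discriminate H1;
    injection H1 as H1; simpl; f_equal; sc.
  - intros [g|h|x|y]; simpl; f_equal.
    + apply comp_id_l.
    + apply comp_id_l.
    + apply lact_id.
    + rewrite ginv_id. apply ract_id.
  - intros [g|h|x|y]; simpl; f_equal.
    + apply comp_id_r.
    + apply comp_id_r.
    + apply ract_id.
    + rewrite ginv_id. apply lact_id.
Defined.

Definition tgam_ob (T : Bitorsor) (e : TOb T) : Iob :=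
  match e with inl _ => a0 | inr _ => b0 end.
Definition tgam_ar (T : Bitorsor) (f : TAr T) : Iar :=
  match f with AG _ => ida0 | AH _ => idb0 | AX _ => iarr | AY _ => iinv end.

Definition tgam (T : Bitorsor) : Functor (tcat T) Icat.
Proof.
  refine (@Build_Functor (tcat T) Icat (@tgam_ob T) (@tgam_ar T) _ _ _ _).
  - intros [g|h|x|y]; reflexivity.
  - intros [g|h|x|y]; reflexivity.
  - intros [a|b]; reflexivity.
  - intros [g1|h1|x1|y1] [g2|h2|x2|y2]; simpl; intro H1; try discriminate H1; reflexivity.
Defined.

Lemma tcat_inv (T : Bitorsor) (f : car (tcat T)) : exists f', d1 f = d0 f' /\ d1 f' = d0 f /\
      ccomp f f' = cid (d0 f) /\ ccomp f' f = cid (d1 f).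
Proof.
  destruct f as [g|h|x|y].
  - exists (AG (ginv g)); simpl; rewrite ?d0_inv, ?d1_inv, ?comp_inv_r, ?comp_inv_l; auto.
  - exists (AH (ginv h)); simpl; rewrite ?d0_inv, ?d1_inv, ?comp_inv_r, ?comp_inv_l; auto.
  - exists (AY x); simpl; repeat split; f_equal.
    + apply lq_unique; [sc|]. apply lact_id.
    + apply rq_unique; [sc|]. apply ract_id.
  - exists (AX y); simpl; repeat split; f_equal.
    + apply rq_unique; [sc|]. apply ract_id.
    + apply lq_unique; [sc|]. apply lact_id.
Qed.

Definition FofT (T : Bitorsor) : FibI.
Proof.
  refine {| fX := tcat T; fgam := tgam T |}.
  - intros [a|b] u Hu; destruct u; simpl in Hu; try discriminate Hu.
    + exists (AG (cid a)); simpl; rewrite d1_id; repeat split; auto.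
      apply gpd_cartesian, tcat_inv.
    + destruct (alpha_surj a) as [y Hy].
      exists (AY y); simpl; rewrite Hy; repeat split; auto.
      apply gpd_cartesian, tcat_inv.
    + exists (AH (cid b)); simpl; rewrite d1_id; repeat split; auto.
      apply gpd_cartesian, tcat_inv.
    + destruct (beta_surj b) as [x Hx].
      exists (AX x); simpl; rewrite Hx; repeat split; auto.
      apply gpd_cartesian, tcat_inv.
  - intros f _. destruct (tcat_inv f) as [f' H]. exists f'. intuition.
  - destruct (ginh (tG T)) as [a]. exact (inhabits (inl a)).
Defined.

Lemma sig_eq (A : Type) (Q : A -> Prop) (s t : {x : A | Q x}) :
  proj1_sig s = proj1_sig t -> s = t.
Proof.
  destruct s as [x p], t as [y q]; simpl; intro E; subst y.
  f_equal; apply proof_irrelevance.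
Qed.

Lemma Ithin (u v : car Icat) : d0 u = d0 v -> d1 u = d1 v -> u = v.
Proof. destruct u, v; simpl; intros H1 H2; try discriminate; reflexivity. Qed.

Lemma Iconn (a b : cob Icat) : exists u : car Icat, d0 u = a /\ d1 u = b.
Proof.
  destruct a, b; [exists ida0 | exists iarr | exists iinv | exists idb0]; auto.
Qed.

Lemma over_id (P : FibI) (f : car (fX P)) o :
  fob (fgam P) (d0 f) = o -> fob (fgam P) (d1 f) = o -> far (fgam P) f = @cid Icat o.
Proof.
  intros H0 H1. apply Ithin; rewrite ?f_d0, ?f_d1, ?d0_id, ?d1_id; auto.
Qed.

Lemma over_u (P : FibI) (f : car (fX P)) (u : car Icat) :
  fob (fgam P) (d0 f) = d0 u -> fob (fgam P) (d1 f) = d1 u -> far (fgam P) f = u.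
Proof.
  intros H0 H1. apply Ithin; rewrite ?f_d0, ?f_d1; auto.
Qed.

Lemma fib_section (P : FibI) (f : car (fX P)) :
  exists s, d0 s = d1 f /\ d1 s = d0 f /\ ccomp s f = cid (d1 f).
Proof.
  destruct (Iconn (fob (fgam P) (d1 f)) (fob (fgam P) (d0 f))) as [u [U0 U1]].
  destruct (@f_fib P (d0 f) u U1) as [k [K1 [K2 _]]].
  assert (V : far (fgam P) (ccomp k f) = cid (fob (fgam P) (d0 (ccomp k f)))).
  { apply over_id; auto. rewrite d0_comp, d1_comp by auto.
    rewrite <- f_d0, K2, U0. reflexivity. }
  destruct (f_gpd V) as [w [W0 [W1 [W2 W3]]]].
  rewrite d0_comp, d1_comp in * by auto.
  exists (ccomp w k). split; [|split].
  - rewrite d0_comp by (rewrite W1; auto). exact W0.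
  - rewrite d1_comp by (rewrite W1; auto). auto.
  - rewrite comp_assoc by (rewrite ?W1; auto). rewrite W3.
    reflexivity.
Qed.

Lemma fib_inv (P : FibI) (f : car (fX P)) :
  exists f', d1 f = d0 f' /\ d1 f' = d0 f /\
      ccomp f f' = cid (d0 f) /\ ccomp f' f = cid (d1 f).
Proof.
  destruct (fib_section f) as [s [S0 [S1 S2]]].
  destruct (fib_section s) as [t [T0 [T1 T2]]].
  assert (E : f = t).
  { transitivity (ccomp (cid (d0 f)) f); [symmetry; apply comp_id_l|].
    rewrite <- S1, <- T2. rewrite comp_assoc by congruence.
    rewrite S2, <- S0, <- T1. apply comp_id_r. }
  subst t. exists s. repeat split; auto. rewrite T2. congruence.
Qed.

Definition inh_arr (P : FibI) : inhabited (car (fX P)) :=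
  match fX_inh P with inhabits e => inhabits (cid e) end.

Definition finv (P : FibI) (f : car (fX P)) : car (fX P) :=
  epsilon (inh_arr P) (fun f' => d1 f = d0 f' /\ d1 f' = d0 f /\
      ccomp f f' = cid (d0 f) /\ ccomp f' f = cid (d1 f)).

Lemma finv_spec (P : FibI) (f : car (fX P)) :
  d1 f = d0 (finv f) /\ d1 (finv f) = d0 f /\
      ccomp f (finv f) = cid (d0 f) /\ ccomp (finv f) f = cid (d1 f).
Proof. unfold finv. apply epsilon_spec. apply fib_inv. Qed.

Lemma finv_d0 (P : FibI) (f : car (fX P)) : d0 (finv f) = d1 f.
Proof. symmetry; apply finv_spec. Qed.
Lemma finv_d1 (P : FibI) (f : car (fX P)) : d1 (finv f) = d0 f.
Proof. apply finv_spec. Qed.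
Lemma finv_r (P : FibI) (f : car (fX P)) : ccomp f (finv f) = cid (d0 f).
Proof. apply finv_spec. Qed.
Lemma finv_l (P : FibI) (f : car (fX P)) : ccomp (finv f) f = cid (d1 f).
Proof. apply finv_spec. Qed.

Lemma finv_unique (P : FibI) (f f' : car (fX P)) :
  d1 f = d0 f' -> ccomp f f' = cid (d0 f) -> finv f = f'.
Proof.
  intros H1 H2.
  rewrite <- (comp_id_r (finv f)), finv_d1, <- H2.
  rewrite <- comp_assoc by (rewrite ?finv_d1, ?finv_d0; auto).
  rewrite finv_l, H1, comp_id_l. reflexivity.
Qed.

Lemma finv_finv (P : FibI) (f : car (fX P)) : finv (finv f) = f.
Proof.
  apply finv_unique; rewrite ?finv_d1, ?finv_d0; auto.
  rewrite finv_l. reflexivity.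
Qed.

Lemma cancel_r (P : FibI) (g g' x : car (fX P)) :
  d1 g = d0 x -> d1 g' = d0 x -> ccomp g x = ccomp g' x -> g = g'.
Proof.
  intros H1 H2 E.
  rewrite <- (comp_id_r g), <- (comp_id_r g'), H1, H2, <- finv_r.
  rewrite <- !comp_assoc by (rewrite ?finv_d0; auto). rewrite E. reflexivity.
Qed.

Lemma cancel_l (P : FibI) (x h h' : car (fX P)) :
  d1 x = d0 h -> d1 x = d0 h' -> ccomp x h = ccomp x h' -> h = h'.
Proof.
  intros H1 H2 E.
  rewrite <- (comp_id_l h), <- (comp_id_l h'), <- H1, <- H2, <- finv_l.
  rewrite !comp_assoc by (rewrite ?finv_d1; auto). rewrite E. reflexivity.
Qed.

Lemma ar_d0_ob (P : FibI) (f : car (fX P)) u : far (fgam P) f = u -> fob (fgam P) (d0 f) = d0 u.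
Proof. intro H; rewrite <- f_d0, H; reflexivity. Qed.
Lemma ar_d1_ob (P : FibI) (f : car (fX P)) u : far (fgam P) f = u -> fob (fgam P) (d1 f) = d1 u.
Proof. intro H; rewrite <- f_d1, H; reflexivity. Qed.

Lemma far_comp (P : FibI) (f g : car (fX P)) u v :
  far (fgam P) f = u -> far (fgam P) g = v -> d1 f = d0 g ->
  far (fgam P) (ccomp f g) = ccomp u v.
Proof. intros H1 H2 H3. rewrite f_comp by auto. rewrite H1, H2. reflexivity. Qed.

Lemma far_inv (P : FibI) (f : car (fX P)) u v :
  far (fgam P) f = u -> d0 v = d1 u -> d1 v = d0 u -> far (fgam P) (finv f) = v.
Proof.
  intros H H0 H1. apply over_u.
  - rewrite finv_d0, (ar_d1_ob H). auto.
  - rewrite finv_d1, (ar_d0_ob H). auto.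
Qed.

Definition scomp (P : FibI) (u : car Icat) (f g : car (fX P))
  (dflt : {h | far (fgam P) h = u}) : {h | far (fgam P) h = u} :=
  match excluded_middle_informative (far (fgam P) (ccomp f g) = u) with
  | left p => exist _ (ccomp f g) p
  | right _ => dflt
  end.

Arguments scomp {P} u f g dflt.

Lemma scomp_val (P : FibI) u (f g : car (fX P)) dflt :
  far (fgam P) (ccomp f g) = u -> proj1_sig (scomp u f g dflt) = ccomp f g.
Proof.
  intro H. unfold scomp. destruct (excluded_middle_informative _) as [p|n].
  - reflexivity.
  - contradiction.
Qed.

Definition FOb (P : FibI) (o : Iob) := {e : cob (fX P) | fob (fgam P) e = o}.
Definition FAr (P : FibI) (u : car Icat) := {f : car (fX P) | far (fgam P) f = u}.

Lemma fid_pf (P : FibI) o (e : FOb P o) : far (fgam P) (cid (proj1_sig e)) = @cid Icat o.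
Proof. rewrite f_id, (proj2_sig e). reflexivity. Qed.

Definition fd0 (P : FibI) o (f : FAr P (@cid Icat o)) : FOb P o :=
  exist _ (d0 (proj1_sig f)) (eq_trans (ar_d0_ob (proj2_sig f)) (@d0_id Icat o)).
Definition fd1 (P : FibI) o (f : FAr P (@cid Icat o)) : FOb P o :=
  exist _ (d1 (proj1_sig f)) (eq_trans (ar_d1_ob (proj2_sig f)) (@d1_id Icat o)).
Definition fidd (P : FibI) o (e : FOb P o) : FAr P (@cid Icat o) :=
  exist _ (cid (proj1_sig e)) (fid_pf e).
Definition fcompp (P : FibI) o (f g : FAr P (@cid Icat o)) : FAr P (@cid Icat o) :=
  scomp (@cid Icat o) (proj1_sig f) (proj1_sig g) f.
Definition finvv (P : FibI) o (f : FAr P (@cid Icat o)) : FAr P (@cid Icat o) :=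
  exist _ (finv (proj1_sig f))
    (far_inv (proj2_sig f) (eq_trans (@d0_id Icat o) (eq_sym (@d1_id Icat o)))
                           (eq_trans (@d1_id Icat o) (eq_sym (@d0_id Icat o)))).

Ltac unsig :=
  repeat match goal with
  | H : @eq _ _ _ |- _ => apply (f_equal (@proj1_sig _ _)) in H; simpl in H
  end;
  try (apply sig_eq; simpl).

Lemma cidcid o : @ccomp Icat (@cid Icat o) (@cid Icat o) = @cid Icat o.
Proof. destruct o; reflexivity. Qed.

Ltac fv :=
  match goal with
  | |- far _ (ccomp (proj1_sig ?f) (proj1_sig ?g)) = _ =>
      rewrite (far_comp (proj2_sig f) (proj2_sig g)) by (simpl; rewrite ?d1_id, ?d0_id; congruence);
      try apply cidcid; try reflexivity
  end.

Definition fibcat (P : FibI) (o : Iob) : Category.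
Proof.
  refine {| cob := FOb P o; car := FAr P (@cid Icat o); d0 := @fd0 P o; d1 := @fd1 P o;
            cid := @fidd P o; ccomp := @fcompp P o |}.
  - intro a; unsig; apply d0_id.
  - intro a; unsig; apply d1_id.
  - intros f g H; unsig; unfold fcompp; rewrite scomp_val by fv; apply d0_comp; auto.
  - intros f g H; unsig; unfold fcompp; rewrite scomp_val by fv; apply d1_comp; auto.
  - intro f; unsig; unfold fcompp.  rewrite scomp_val by fv; apply comp_id_l.
  - intro f; unsig; unfold fcompp; rewrite scomp_val by fv; apply comp_id_r.
  - intros f g h H1 H2; unsig; unfold fcompp.
    rewrite !scomp_val; try fv.
    + apply comp_assoc; auto.
    + rewrite scomp_val by fv.
      rewrite (far_comp (proj2_sig f) (far_comp (proj2_sig g) (proj2_sig h) H2)).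
      * rewrite !cidcid; reflexivity.
      * rewrite d0_comp; auto.
    + rewrite scomp_val by fv.
      rewrite (far_comp (far_comp (proj2_sig f) (proj2_sig g) H1) (proj2_sig h)).
      * rewrite !cidcid; reflexivity.
      * rewrite d1_comp; auto.
Defined.

Lemma ob_exists (P : FibI) o : exists e, fob (fgam P) e = o.
Proof.
  destruct (fX_inh P) as [e].
  destruct (Iconn o (fob (fgam P) e)) as [u [U0 U1]].
  destruct (@f_fib P e u U1) as [f [F1 [F2 _]]].
  exists (d0 f). rewrite (ar_d0_ob F2). auto.
Qed.

Definition fibgpd (P : FibI) (o : Iob) : Groupoid.
Proof.
  refine (@Build_Groupoid (fibcat P o) (@finvv P o) _ _ _ _ _).
  - intro f; unsig; apply finv_d0.
  - intro f; unsig; apply finv_d1.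
  - intro f; unsig; unfold fcompp; rewrite scomp_val; [apply finv_r|].
    rewrite finv_r, f_id, (ar_d0_ob (proj2_sig f)), d0_id; reflexivity.
  - intro f; unsig; unfold fcompp; rewrite scomp_val; [apply finv_l|].
    simpl; rewrite finv_l; apply over_id; rewrite ?d0_id, ?d1_id; exact (eq_trans (ar_d1_ob (proj2_sig f)) (@d1_id Icat o)).
  - destruct (ob_exists P o) as [e He]. exact (inhabits (exist _ e He)).
Defined.

Definition Xalpha (P : FibI) (x : FAr P iarr) : FOb P a0 :=
  exist _ (d0 (proj1_sig x)) (ar_d0_ob (proj2_sig x)).
Definition Xbeta (P : FibI) (x : FAr P iarr) : FOb P b0 :=
  exist _ (d1 (proj1_sig x)) (ar_d1_ob (proj2_sig x)).
Definition Xlact (P : FibI) (g : FAr P (@cid Icat a0)) (x : FAr P iarr) : FAr P iarr :=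
  scomp iarr (proj1_sig g) (proj1_sig x) x.
Definition Xract (P : FibI) (x : FAr P iarr) (h : FAr P (@cid Icat b0)) : FAr P iarr :=
  scomp iarr (proj1_sig x) (proj1_sig h) x.

Ltac fv2 :=
  match goal with
  | |- far _ (ccomp (proj1_sig ?f) (proj1_sig ?g)) = _ =>
      rewrite (far_comp (proj2_sig f) (proj2_sig g)) by (simpl; rewrite ?d1_id, ?d0_id; first [assumption | congruence]);
      first [reflexivity | apply cidcid]
  end.

Lemma Xlact_val (P : FibI) (g : FAr P (@cid Icat a0)) (x : FAr P iarr) :
  d1 (proj1_sig g) = d0 (proj1_sig x) -> proj1_sig (Xlact g x) = ccomp (proj1_sig g) (proj1_sig x).
Proof. intro H. unfold Xlact. rewrite scomp_val by fv2. reflexivity. Qed.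
Lemma Xract_val (P : FibI) (x : FAr P iarr) (h : FAr P (@cid Icat b0)) :
  d1 (proj1_sig x) = d0 (proj1_sig h) -> proj1_sig (Xract x h) = ccomp (proj1_sig x) (proj1_sig h).
Proof. intro H. unfold Xract. rewrite scomp_val by fv2. reflexivity. Qed.
Lemma fcompp_val (P : FibI) o (f g : FAr P (@cid Icat o)) :
  d1 (proj1_sig f) = d0 (proj1_sig g) -> proj1_sig (fcompp f g) = ccomp (proj1_sig f) (proj1_sig g).
Proof. intro H. unfold fcompp. rewrite scomp_val by fv2. reflexivity. Qed.

Ltac cb := cbn [proj1_sig fd0 fd1 fidd finvv Xalpha Xbeta fibgpd fibcat gcat d0 d1 cid ccomp ginv cob car] in *.

Ltac unsig' :=
  repeat match goal with
  | H : @eq _ _ _ |- _ => apply (f_equal (@proj1_sig _ _)) in H; cb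
  end;
  try (apply sig_eq; cb).

Ltac sp := cb;
  first
  [ reflexivity | assumption | (symmetry; assumption)
  | match goal with
    | |- context [proj1_sig (Xlact ?g ?x)] => rewrite (@Xlact_val _ g x) by sp; sp
    | |- context [proj1_sig (Xract ?x ?h)] => rewrite (@Xract_val _ x h) by sp; sp
    | |- context [proj1_sig (fcompp ?f ?g)] => rewrite (@fcompp_val _ _ f g) by sp; sp
    | |- context [d0 (ccomp ?f ?g)] => rewrite (@d0_comp _ f g) by sp; sp
    | |- context [d1 (ccomp ?f ?g)] => rewrite (@d1_comp _ f g) by sp; sp
    | |- context [d0 (finv _)] => rewrite finv_d0; sp
    | |- context [d1 (finv _)] => rewrite finv_d1; sp
    | |- context [d0 (cid _)] => rewrite d0_id; sp
    | |- context [d1 (cid _)] => rewrite d1_id; sp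
    end
  | congruence ].

Lemma pf_lq (P : FibI) (x y : FAr P iarr) :
  d1 (proj1_sig x) = d1 (proj1_sig y) ->
  far (fgam P) (ccomp (proj1_sig y) (finv (proj1_sig x))) = @cid Icat a0.
Proof.
  intro H.
  rewrite (far_comp (proj2_sig y) (far_inv (v := iinv) (proj2_sig x) eq_refl eq_refl)).
  - reflexivity.
  - rewrite finv_d0. congruence.
Qed.

Lemma pf_rq (P : FibI) (x y : FAr P iarr) :
  d0 (proj1_sig x) = d0 (proj1_sig y) ->
  far (fgam P) (ccomp (finv (proj1_sig x)) (proj1_sig y)) = @cid Icat b0.
Proof.
  intro H.
  rewrite (far_comp (far_inv (v := iinv) (proj2_sig x) eq_refl eq_refl) (proj2_sig y)).
  - reflexivity.
  - rewrite finv_d1. congruence.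
Qed.

Definition GofP (P : FibI) : Bitorsor.
Proof.
  refine (@Build_Bitorsor (fibgpd P a0) (fibgpd P b0) (FAr P iarr)
            (@Xalpha P) (@Xbeta P) (@Xlact P) (@Xract P) _ _ _ _ _ _ _ _ _ _ _ _ _ _).
  - intros g x H; unsig'; sp.
  - intros x; unsig'; rewrite Xlact_val by sp; apply comp_id_l.
  - intros g g' x H1 H2; unsig'.
    rewrite !Xlact_val by sp. rewrite fcompp_val by sp. apply comp_assoc; sp.
  - intros x h H; unsig'; sp.
  - intros x; unsig'; rewrite Xract_val by sp; apply comp_id_r.
  - intros x h h' H1 H2; unsig'.
    rewrite !Xract_val by sp. rewrite fcompp_val by sp. apply comp_assoc; sp.
  - intros g x h H1 H2; unsig'.
    rewrite Xract_val by sp. rewrite !Xlact_val by sp. rewrite Xract_val by sp.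
    apply comp_assoc; sp.
  - destruct (ob_exists P b0) as [e He].
    destruct (@f_fib P e iarr (eq_sym He)) as [f [F1 [F2 _]]].
    exact (inhabits (exist _ f F2)).
  - intros [e He].
    destruct (@f_fib P e iinv (eq_sym He)) as [k [K1 [K2 _]]].
    exists (exist _ (finv k) (far_inv (v := iarr) K2 eq_refl eq_refl)).
    unsig'. rewrite finv_d0. exact K1.
  - intros [e He].
    destruct (@f_fib P e iarr (eq_sym He)) as [f [F1 [F2 _]]].
    exists (exist _ f F2). unsig'. exact F1.
  - intros g g' x H1 H2 E; unsig'.
    rewrite !Xlact_val in E by sp. apply (cancel_r (eq_sym H1) (eq_sym H2) E).
  - intros h h' x H1 H2 E; unsig'.
    rewrite !Xract_val in E by sp. apply (cancel_l H1 H2 E).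
  - intros x y; split.
    + intro H; unsig'.
      exists (exist _ (ccomp (proj1_sig y) (finv (proj1_sig x))) (pf_lq H)).
      split; unsig'.
      * sp.
      * rewrite Xlact_val by sp. cb.
        rewrite comp_assoc by sp. rewrite finv_l, H. symmetry; apply comp_id_r.
    + intros [g [H1 H2]]. subst y. unsig'. sp.
  - intros x y; split.
    + intro H; unsig'.
      exists (exist _ (ccomp (finv (proj1_sig x)) (proj1_sig y)) (pf_rq H)).
      split; unsig'.
      * sp.
      * rewrite Xract_val by sp. cb.
        rewrite <- comp_assoc by sp. rewrite finv_r, H. symmetry; apply comp_id_l.
    + intros [h [H1 H2]]. subst y. unsig'. sp.
Defined.

Ltac cb ::= cbn [proj1_sig fd0 fd1 fidd finvv Xalpha Xbeta fibgpd fibcat gcat d0 d1 cid ccomp ginv cob car GofP tG tH tX alpha beta lact ract fob far] in *.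

Lemma functor_ginv (G G' : Groupoid) (F : Functor G G') (g : car G) :
  far F (ginv g) = ginv (far F g).
Proof.
  symmetry; apply ginv_unique.
  - rewrite f_d1, f_d0, d0_inv. reflexivity.
  - rewrite <- f_comp by (rewrite d0_inv; reflexivity).
    rewrite comp_inv_r, f_id, f_d0. reflexivity.
Qed.

Definition Fm_ob (T T' : Bitorsor) (m : BitorsorMor T T') (e : TOb T) : TOb T' :=
  match e with inl a => inl (fob (mG m) a) | inr b => inr (fob (mH m) b) end.
Definition Fm_ar (T T' : Bitorsor) (m : BitorsorMor T T') (f : TAr T) : TAr T' :=
  match f with
  | AG g => AG (far (mG m) g) | AH h => AH (far (mH m) h)
  | AX x => AX (mX m x) | AY y => AY (mX m y) end.

Definition Fm_fun (T T' : Bitorsor) (m : BitorsorMor T T') : Functor (tcat T) (tcat T').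
Proof.
  refine (@Build_Functor (tcat T) (tcat T') (Fm_ob m) (Fm_ar m) _ _ _ _).
  - intros [g|h|x|y]; simpl; f_equal; auto using f_d0, m_alpha, m_beta.
  - intros [g|h|x|y]; simpl; f_equal; auto using f_d1, m_alpha, m_beta.
  - intros [a|b]; simpl; f_equal; apply f_id.
  - intros [g1|h1|x1|y1] [g2|h2|x2|y2]; simpl; intro H1; try discriminate H1;
      injection H1 as H1; simpl; f_equal.
    + apply f_comp; auto.
    + apply m_lact; auto.
    + apply f_comp; auto.
    + rewrite m_ract by sc. rewrite functor_ginv. reflexivity.
    + apply m_ract; auto.
    + symmetry; apply lq_unique.
      * rewrite m_alpha, f_d1, lq_d1 by auto. reflexivity.
      * rewrite <- m_lact by sc. rewrite lq_act by auto. reflexivity.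
    + rewrite m_lact by sc. rewrite functor_ginv. reflexivity.
    + symmetry; apply rq_unique.
      * rewrite m_beta, f_d0, rq_d0 by auto. reflexivity.
      * rewrite <- m_ract by sc. rewrite rq_act by auto. reflexivity.
Defined.

Definition Fm (T T' : Bitorsor) (m : BitorsorMor T T') : FibMor (FofT T) (FofT T').
Proof.
  refine (@Build_FibMor (FofT T) (FofT T') (Fm_fun m) _ _).
  - intros [a|b]; reflexivity.
  - intros [g|h|x|y]; reflexivity.
Defined.

Definition fibF_fun (P Q : FibI) (m : FibMor P Q) (o : Iob) :
  Functor (fibgpd P o) (fibgpd Q o).
Proof.
  refine (@Build_Functor (fibgpd P o) (fibgpd Q o)
    (fun e => exist _ (fob (mF m) (proj1_sig e)) (eq_trans (mF_ob m _) (proj2_sig e)))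
    (fun f => exist _ (far (mF m) (proj1_sig f)) (eq_trans (mF_ar m _) (proj2_sig f)))
    _ _ _ _).
  - intro f; unsig'; apply f_d0.
  - intro f; unsig'; apply f_d1.
  - intro a; unsig'; apply f_id.
  - intros f g H; unsig'.
    rewrite !fcompp_val by (cb; rewrite ?f_d0, ?f_d1; congruence). cb. apply f_comp; auto.
Defined.

Ltac cb ::= cbn [proj1_sig fd0 fd1 fidd finvv Xalpha Xbeta fibgpd fibcat gcat d0 d1 cid ccomp ginv cob car GofP tG tH tX alpha beta lact ract fob far fibF_fun] in *.

Definition Gm (P Q : FibI) (m : FibMor P Q) : BitorsorMor (GofP P) (GofP Q).
Proof.
  refine (@Build_BitorsorMor (GofP P) (GofP Q) (fibF_fun m a0) (fibF_fun m b0)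
    (fun x => exist _ (far (mF m) (proj1_sig x)) (eq_trans (mF_ar m _) (proj2_sig x)))
    _ _ _ _).
  - intro x; unsig'; apply f_d0.
  - intro x; unsig'; apply f_d1.
  - intros g x H; unsig'.
    rewrite !Xlact_val by (cb; rewrite ?f_d0, ?f_d1; congruence). cb. apply f_comp; auto.
  - intros x h H; unsig'.
    rewrite !Xract_val by (cb; rewrite ?f_d0, ?f_d1; congruence). cb. apply f_comp; auto.
Defined.


Definition jA (T : Bitorsor) : cob (tG T) := epsilon (ginh (tG T)) (fun _ => True).
Definition jB (T : Bitorsor) : cob (tH T) := epsilon (ginh (tH T)) (fun _ => True).
Definition jX (T : Bitorsor) : tX T := epsilon (X_inh T) (fun _ => True).
Definition pa (T : Bitorsor) (e : TOb T) : cob (tG T) :=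
  match e with inl a => a | inr _ => jA T end.
Definition pb (T : Bitorsor) (e : TOb T) : cob (tH T) :=
  match e with inr b => b | inl _ => jB T end.
Definition pg (T : Bitorsor) (f : TAr T) : car (tG T) :=
  match f with AG g => g | _ => cid (jA T) end.
Definition ph (T : Bitorsor) (f : TAr T) : car (tH T) :=
  match f with AH h => h | _ => cid (jB T) end.
Definition px (T : Bitorsor) (f : TAr T) : tX T :=
  match f with AX x => x | _ => jX T end.

Ltac dsig s := let a := fresh "a" in let p := fresh "p" in
  destruct s as [[a|a|a|a] p]; cbn in p; try discriminate p.
Ltac dsigo s := let a := fresh "a" in let p := fresh "p" in
  destruct s as [[a|a] p]; cbn in p; try discriminate p.

Definition etaG (T : Bitorsor) : Functor (tG (GofP (FofT T))) (tG T).
Proof.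
  refine (@Build_Functor (tG (GofP (FofT T))) (tG T)
            (fun s => pa (proj1_sig s)) (fun f => pg (proj1_sig f)) _ _ _ _).
  - intro f; dsig f; reflexivity.
  - intro f; dsig f; reflexivity.
  - intro s; dsigo s; reflexivity.
  - intros f g H; unsig'. rewrite fcompp_val by exact H.
    dsig f; dsig g; reflexivity.
Defined.

Definition etaH (T : Bitorsor) : Functor (tH (GofP (FofT T))) (tH T).
Proof.
  refine (@Build_Functor (tH (GofP (FofT T))) (tH T)
            (fun s => pb (proj1_sig s)) (fun f => ph (proj1_sig f)) _ _ _ _).
  - intro f; dsig f; reflexivity.
  - intro f; dsig f; reflexivity.
  - intro s; dsigo s; reflexivity.
  - intros f g H; unsig'. rewrite fcompp_val by exact H.
    dsig f; dsig g; reflexivity.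
Defined.

Definition eta (T : Bitorsor) : BitorsorMor (GofP (FofT T)) T.
Proof.
  refine (@Build_BitorsorMor (GofP (FofT T)) T (etaG T) (etaH T)
            (fun x => px (proj1_sig x)) _ _ _ _).
  - intro x; dsig x; reflexivity.
  - intro x; dsig x; reflexivity.
  - intros g x H; unsig'. rewrite Xlact_val by exact (eq_sym H).
    dsig g; dsig x; reflexivity.
  - intros x h H; unsig'. rewrite Xract_val by exact H.
    dsig h; dsig x; reflexivity.
Defined.

Definition etaG' (T : Bitorsor) : Functor (tG T) (tG (GofP (FofT T))).
Proof.
  refine (@Build_Functor (tG T) (tG (GofP (FofT T)))
            (fun a => (exist _ (inl a) eq_refl : FOb (FofT T) a0))
            (fun g => (exist _ (AG g) eq_refl : FAr (FofT T) (@cid Icat a0))) _ _ _ _).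
  - intro f; unsig'; reflexivity.
  - intro f; unsig'; reflexivity.
  - intro a; unsig'; reflexivity.
  - intros f g H; unsig'. rewrite fcompp_val by (cbn; congruence). reflexivity.
Defined.

Definition etaH' (T : Bitorsor) : Functor (tH T) (tH (GofP (FofT T))).
Proof.
  refine (@Build_Functor (tH T) (tH (GofP (FofT T)))
            (fun a => (exist _ (inr a) eq_refl : FOb (FofT T) b0))
            (fun g => (exist _ (AH g) eq_refl : FAr (FofT T) (@cid Icat b0))) _ _ _ _).
  - intro f; unsig'; reflexivity.
  - intro f; unsig'; reflexivity.
  - intro a; unsig'; reflexivity.
  - intros f g H; unsig'. rewrite fcompp_val by (cbn; congruence). reflexivity.
Defined.

Definition eta' (T : Bitorsor) : BitorsorMor T (GofP (FofT T)).
Proof.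
  refine (@Build_BitorsorMor T (GofP (FofT T)) (etaG' T) (etaH' T)
            (fun x => (exist _ (AX x) eq_refl : FAr (FofT T) iarr)) _ _ _ _).
  - intro x; unsig'; reflexivity.
  - intro x; unsig'; reflexivity.
  - intros g x H; unsig'. rewrite Xlact_val by (cbn; congruence). reflexivity.
  - intros x h H; unsig'. rewrite Xract_val by (cbn; congruence). reflexivity.
Defined.

Lemma eta_iso1 (T : Bitorsor) : bmor_eq (bmor_comp (eta T) (eta' T)) (bmor_id _).
Proof.
  unfold bmor_eq; repeat split.
  - intro s; apply sig_eq; dsigo s; reflexivity.
  - intro s; apply sig_eq; dsig s; reflexivity.
  - intro s; apply sig_eq; dsigo s; reflexivity.
  - intro s; apply sig_eq; dsig s; reflexivity.
  - intro s; apply sig_eq; dsig s; reflexivity.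
Qed.

Lemma eta_iso2 (T : Bitorsor) : bmor_eq (bmor_comp (eta' T) (eta T)) (bmor_id _).
Proof. unfold bmor_eq; repeat split. Qed.

Lemma eta_nat (T T' : Bitorsor) (m : BitorsorMor T T') :
  bmor_eq (bmor_comp (Gm (Fm m)) (eta T')) (bmor_comp (eta T) m).
Proof.
  unfold bmor_eq; repeat split.
  - intro s; dsigo s; reflexivity.
  - intro s; dsig s; reflexivity.
  - intro s; dsigo s; reflexivity.
  - intro s; dsig s; reflexivity.
  - intro s; dsig s; reflexivity.
Qed.

Lemma finv_comp (P : FibI) (f g : car (fX P)) : d1 f = d0 g ->
  finv (ccomp f g) = ccomp (finv g) (finv f).
Proof.
  intro H. apply finv_unique.
  - rewrite d1_comp, d0_comp, finv_d0; auto; rewrite ?finv_d1, ?finv_d0; auto.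
  - rewrite comp_assoc; rewrite ?d1_comp, ?d0_comp, ?finv_d1, ?finv_d0; auto.
    rewrite <- (@comp_assoc _ g (finv g)); rewrite ?finv_d1, ?finv_d0; auto.
    rewrite finv_r, <- H, <- (finv_d0 f), comp_id_l, finv_r. reflexivity.
    rewrite finv_d1, finv_d0; congruence.
Qed.

Lemma functor_finv (P Q : FibI) (F : Functor (fX P) (fX Q)) (f : car (fX P)) :
  far F (finv f) = finv (far F f).
Proof.
  symmetry; apply finv_unique.
  - rewrite f_d1, f_d0, finv_d0. reflexivity.
  - rewrite <- f_comp by (rewrite finv_d0; reflexivity).
    rewrite finv_r, f_id, f_d0. reflexivity.
Qed.

Definition epsF_ob (P : FibI) (e : TOb (GofP P)) : cob (fX P) :=
  match e with inl s => proj1_sig s | inr s => proj1_sig s end.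
Definition epsF_ar (P : FibI) (f : TAr (GofP P)) : car (fX P) :=
  match f with
  | AG g => proj1_sig g | AH h => proj1_sig h
  | AX x => proj1_sig x | AY y => finv (proj1_sig y) end.

Lemma lq_val (P : FibI) (x y : tX (GofP P)) : beta x = beta y ->
  proj1_sig (lq x y) = ccomp (proj1_sig x) (finv (proj1_sig y)).
Proof.
  intro H.
  pose proof (lq_d1 H) as H1. pose proof (lq_act H) as H2.
  unsig'. rewrite Xlact_val in H2 by exact H1.
  rewrite <- H2. rewrite comp_assoc by (rewrite ?finv_d0; auto).
  rewrite finv_r, <- H1. symmetry; apply comp_id_r.
Qed.

Lemma rq_val (P : FibI) (y x : tX (GofP P)) : alpha y = alpha x ->
  proj1_sig (rq y x) = ccomp (finv (proj1_sig y)) (proj1_sig x).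
Proof.
  intro H.
  pose proof (rq_d0 H) as H1. pose proof (rq_act H) as H2.
  unsig'. rewrite Xract_val in H2 by exact (eq_sym H1).
  rewrite <- H2. rewrite <- comp_assoc by (rewrite ?finv_d1; auto).
  rewrite finv_l, <- H1. symmetry; apply comp_id_l.
Qed.

Definition epsF (P : FibI) : Functor (tcat (GofP P)) (fX P).
Proof.
  refine (@Build_Functor (tcat (GofP P)) (fX P) (@epsF_ob P) (@epsF_ar P) _ _ _ _).
  - intros [g|h|x|y]; simpl; try reflexivity. apply finv_d0.
  - intros [g|h|x|y]; simpl; try reflexivity. apply finv_d1.
  - intros [a|b]; reflexivity.
  - intros [g1|h1|x1|y1] [g2|h2|x2|y2]; cbn [tcomp epsF_ar td0 td1 d0 d1 tcat ccomp far];
      intro H1; try discriminate H1;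
      injection H1 as H1; cbn [tcomp epsF_ar td0 td1 d0 d1 tcat ccomp far].
    + apply fcompp_val. try (apply (f_equal (@proj1_sig _ _)) in H1). exact H1.
    + apply Xlact_val. try (apply (f_equal (@proj1_sig _ _)) in H1). exact H1.
    + apply fcompp_val. try (apply (f_equal (@proj1_sig _ _)) in H1). exact H1.
    + try (apply (f_equal (@proj1_sig _ _)) in H1).
      cbn [ract lact GofP ginv fibgpd].
      rewrite Xract_val by (cbn [ginv tH tG GofP fibgpd finvv proj1_sig]; rewrite finv_d0; first [exact H1 | exact (eq_sym H1)]).
      cbn [ginv tH tG GofP fibgpd finvv proj1_sig].
      rewrite finv_comp by (rewrite finv_d0; first [exact H1 | exact (eq_sym H1)]).
      rewrite finv_finv. reflexivity.
    + apply Xract_val. try (apply (f_equal (@proj1_sig _ _)) in H1). exact H1.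
    + apply lq_val. apply sig_eq. exact H1.
    + try (apply (f_equal (@proj1_sig _ _)) in H1).
      cbn [ract lact GofP ginv fibgpd].
      rewrite Xlact_val by (cbn [ginv tH tG GofP fibgpd finvv proj1_sig]; rewrite finv_d1; first [exact H1 | exact (eq_sym H1)]).
      cbn [ginv tH tG GofP fibgpd finvv proj1_sig].
      rewrite finv_comp by (rewrite finv_d1; first [exact H1 | exact (eq_sym H1)]).
      rewrite finv_finv. reflexivity.
    + apply rq_val. apply sig_eq. exact H1.
Defined.

Definition eps (P : FibI) : FibMor (FofT (GofP P)) P.
Proof.
  refine (@Build_FibMor (FofT (GofP P)) P (epsF P) _ _).
  - intros [s|s]; exact (proj2_sig s).
  - intros [g|h|x|y].
    + exact (proj2_sig g).
    + exact (proj2_sig h).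
    + exact (proj2_sig x).
    + exact (far_inv (v := iinv) (proj2_sig y) eq_refl eq_refl).
Defined.

Lemma notA (x : Iob) : x <> a0 -> x = b0.
Proof. destruct x; congruence. Qed.
Lemma not3 (u : Iar) : u <> ida0 -> u <> idb0 -> u <> iarr -> u = iinv.
Proof. destruct u; congruence. Qed.

Definition eob (P : FibI) (e : cob (fX P)) : TOb (GofP P) :=
  match excluded_middle_informative (fob (fgam P) e = a0) with
  | left p => inl (exist _ e p : FOb P a0)
  | right n => inr (exist _ e (notA n) : FOb P b0)
  end.

Definition ear (P : FibI) (f : car (fX P)) : TAr (GofP P) :=
  match excluded_middle_informative (far (fgam P) f = ida0) with
  | left p => @AG (GofP P) (exist _ f p : FAr P (@cid Icat a0))
  | right n1 =>
    match excluded_middle_informative (far (fgam P) f = idb0) with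
    | left p => @AH (GofP P) (exist _ f p : FAr P (@cid Icat b0))
    | right n2 =>
      match excluded_middle_informative (far (fgam P) f = iarr) with
      | left p => @AX (GofP P) (exist _ f p : FAr P iarr)
      | right n3 => @AY (GofP P) (exist _ (finv f) (far_inv (v := iarr) (not3 n1 n2 n3) eq_refl eq_refl)
                        : FAr P iarr)
      end
    end
  end.

Ltac emcases := repeat destruct (excluded_middle_informative _);
  try (f_equal; apply sig_eq; reflexivity); try congruence.

Lemma eob_a (P : FibI) (e : cob (fX P)) (p : fob (fgam P) e = a0) :
  eob e = @inl (FOb P a0) (FOb P b0) (exist _ e p).
Proof. unfold eob; emcases. Qed.
Lemma eob_b (P : FibI) (e : cob (fX P)) (p : fob (fgam P) e = b0) :
  eob e = @inr (FOb P a0) (FOb P b0) (exist _ e p).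
Proof. unfold eob; emcases. Qed.
Lemma ear_G (P : FibI) (f : car (fX P)) (p : far (fgam P) f = ida0) :
  ear f = @AG (GofP P) (exist _ f p : FAr P (@cid Icat a0)).
Proof. unfold ear; emcases. Qed.
Lemma ear_H (P : FibI) (f : car (fX P)) (p : far (fgam P) f = idb0) :
  ear f = @AH (GofP P) (exist _ f p : FAr P (@cid Icat b0)).
Proof. unfold ear; emcases. Qed.
Lemma ear_X (P : FibI) (f : car (fX P)) (p : far (fgam P) f = iarr) :
  ear f = @AX (GofP P) (exist _ f p : FAr P iarr).
Proof. unfold ear; emcases. Qed.
Lemma ear_Y (P : FibI) (f : car (fX P)) (p : far (fgam P) f = iinv) :
  ear f = @AY (GofP P) (exist _ (finv f) (far_inv (v := iarr) p eq_refl eq_refl) : FAr P iarr).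
Proof. unfold ear; emcases. Qed.

Ltac rew_ear E :=
  first [ rewrite (ear_G E) | rewrite (ear_H E) | rewrite (ear_X E) | rewrite (ear_Y E) ].

Ltac ssd := cbn; rewrite ?finv_d0, ?finv_d1; congruence.

Definition epsF' (P : FibI) : Functor (fX P) (tcat (GofP P)).
Proof.
  refine (@Build_Functor (fX P) (tcat (GofP P)) (@eob P) (@ear P) _ _ _ _).
  - intro f. destruct (far (fgam P) f) eqn:E; rew_ear E; cbn [td0 d0 tcat].
    + rewrite (eob_a (ar_d0_ob E)). f_equal; apply sig_eq; reflexivity.
    + rewrite (eob_b (ar_d0_ob E)). f_equal; apply sig_eq; reflexivity.
    + rewrite (eob_a (ar_d0_ob E)). f_equal; apply sig_eq; reflexivity.
    + rewrite (eob_b (ar_d0_ob E)). f_equal; apply sig_eq; apply finv_d1.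
  - intro f. destruct (far (fgam P) f) eqn:E; rew_ear E; cbn [td1 d1 tcat].
    + rewrite (eob_a (ar_d1_ob E)). f_equal; apply sig_eq; reflexivity.
    + rewrite (eob_b (ar_d1_ob E)). f_equal; apply sig_eq; reflexivity.
    + rewrite (eob_b (ar_d1_ob E)). f_equal; apply sig_eq; reflexivity.
    + rewrite (eob_a (ar_d1_ob E)). f_equal; apply sig_eq; apply finv_d0.
  - intro e. destruct (fob (fgam P) e) eqn:E.
    + rewrite (ear_G (eq_trans (@f_id _ _ (fgam P) e) (f_equal (@cid Icat) E))).
      rewrite (eob_a E). cbn [tid cid tcat]. f_equal; apply sig_eq; reflexivity.
    + rewrite (ear_H (eq_trans (@f_id _ _ (fgam P) e) (f_equal (@cid Icat) E))).
      rewrite (eob_b E). cbn [tid cid tcat]. f_equal; apply sig_eq; reflexivity.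
  - intros f g H.
    pose proof (eq_trans (@f_d1 _ _ (fgam P) f) (eq_trans (f_equal _ H) (eq_sym (@f_d0 _ _ (fgam P) g)))) as K.
    destruct (far (fgam P) f) eqn:E1; destruct (far (fgam P) g) eqn:E2;
      cbn in K; try discriminate K;
      pose proof (far_comp E1 E2 H) as E; cbn in E; rew_ear E; rew_ear E1; rew_ear E2;
      cbn [tcomp ccomp tcat]; f_equal; apply sig_eq.
    + symmetry; etransitivity; [apply fcompp_val; exact H | reflexivity].
    + symmetry; etransitivity; [apply Xlact_val; exact H | reflexivity].
    + symmetry; etransitivity; [apply fcompp_val; exact H | reflexivity].
    + symmetry; etransitivity; [apply Xract_val; ssd | ].
      cbn [proj1_sig]. rewrite finv_comp by exact H. reflexivity.
    + symmetry; etransitivity; [apply Xract_val; exact H | reflexivity].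
    + symmetry; etransitivity; [apply lq_val; apply sig_eq; ssd | ].
      cbn [proj1_sig]. rewrite finv_finv. reflexivity.
    + symmetry; etransitivity; [apply Xlact_val; ssd | ].
      cbn [proj1_sig]. rewrite finv_comp by exact H. reflexivity.
    + symmetry; etransitivity; [apply rq_val; apply sig_eq; ssd | ].
      cbn [proj1_sig]. rewrite finv_finv. reflexivity.
Defined.

Definition eps' (P : FibI) : FibMor P (FofT (GofP P)).
Proof.
  refine (@Build_FibMor P (FofT (GofP P)) (epsF' P) _ _).
  - intro e. cbn [fob epsF']. destruct (fob (fgam P) e) eqn:E.
    + rewrite (eob_a E). reflexivity.
    + rewrite (eob_b E). reflexivity.
  - intro f. cbn [far epsF']. destruct (far (fgam P) f) eqn:E; rew_ear E; reflexivity.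
Defined.

Lemma eps_iso1 (P : FibI) : fmor_eq (fmor_comp (eps P) (eps' P)) (fmor_id _).
Proof.
  split.
  - intros [s|s]; cbn [fmor_comp fmor_id mF functor_comp functor_id fob eps eps' epsF epsF'
                      epsF_ob].
    + rewrite (eob_a (proj2_sig s)). f_equal; apply sig_eq; reflexivity.
    + rewrite (eob_b (proj2_sig s)). f_equal; apply sig_eq; reflexivity.
  - intros [g|h|x|y]; cbn [fmor_comp fmor_id mF functor_comp functor_id far eps eps' epsF epsF'
                      epsF_ar].
    + rewrite (ear_G (proj2_sig g)). f_equal; apply sig_eq; reflexivity.
    + rewrite (ear_H (proj2_sig h)). f_equal; apply sig_eq; reflexivity.
    + rewrite (ear_X (proj2_sig x)). f_equal; apply sig_eq; reflexivity.
    + rewrite (ear_Y (far_inv (v := iinv) (proj2_sig y) eq_refl eq_refl)).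
      f_equal; apply sig_eq; apply finv_finv.
Qed.

Lemma eps_iso2 (P : FibI) : fmor_eq (fmor_comp (eps' P) (eps P)) (fmor_id _).
Proof.
  split.
  - intro e; cbn [fmor_comp fmor_id mF functor_comp functor_id fob eps eps' epsF epsF'].
    destruct (fob (fgam P) e) eqn:E.
    + rewrite (eob_a E). reflexivity.
    + rewrite (eob_b E). reflexivity.
  - intro f; cbn [fmor_comp fmor_id mF functor_comp functor_id far eps eps' epsF epsF'].
    destruct (far (fgam P) f) eqn:E; rew_ear E; try reflexivity.
    apply finv_finv.
Qed.

Lemma eps_nat (P Q : FibI) (m : FibMor P Q) :
  fmor_eq (fmor_comp (Fm (Gm m)) (eps Q)) (fmor_comp (eps P) m).
Proof.
  split.
  - intros [s|s]; reflexivity.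
  - intros [g|h|x|y]; try reflexivity.
    cbn. symmetry. apply functor_finv.
Qed.

Definition Fcat : CFunctor lrTORS FibIcat.
Proof.
  refine (@Build_CFunctor lrTORS FibIcat FofT (fun a b m => Fm m) _ _ _).
  - intros a b f g H. destruct H as (H1&H2&H3&H4&H5). split.
    + intros [x|y]; cbn; f_equal; auto.
    + intros [x|y|z|w]; cbn; f_equal; auto.
  - intro a; split; [intros [x|y] | intros [x|y|z|w]]; reflexivity.
  - intros a b c f g; split; [intros [x|y] | intros [x|y|z|w]]; reflexivity.
Defined.

Definition Gcat : CFunctor FibIcat lrTORS.
Proof.
  refine (@Build_CFunctor FibIcat lrTORS GofP (fun P Q m => Gm m) _ _ _).
  - intros P Q m m' H. destruct H as [H1 H2].
    repeat split; intro; apply sig_eq; cbn; auto.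
  - intro P; repeat split; intro; apply sig_eq; reflexivity.
  - intros P Q R f g; repeat split; intro; apply sig_eq; reflexivity.
Defined.

Theorem theorem3 : CatEquiv lrTORS FibIcat.
Proof.
  exists Fcat, Gcat. split.
  - exists (fun T => eta T), (fun T => eta' T). split; [|split].
    + intro T. apply eta_iso1.
    + intro T. apply eta_iso2.
    + intros T T' m. apply eta_nat.
  - exists (fun P => eps P), (fun P => eps' P). split; [|split].
    + intro P. apply eps_iso1.
    + intro P. apply eps_iso2.
    + intros P Q m. apply eps_nat.
Qed.
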